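(* Let $\mathcal{M}=\langle S,\to,L\rangle$ be a labeled transition system, let $B\subseteq S\times S$ be a skipping simulation on $\mathcal{M}$, and let $s,u,w\in S$ with $sBw$, $s\to u$, and $\langle s,u\rangle$ a node of $\mathit{ranktCt}(\mathcal{M},s,w)$. Then $\mathit{size}(\mathit{ranktCt}(\mathcal{M},u,w))\prec\mathit{size}(\mathit{ranktCt}(\mathcal{M},s,w))$.
   Context: A labeled transition system is $\mathcal{M}=\langle S,\to,L\rangle$ where $S$ is a non-empty set of states, $\to\subseteq S\times S$ is left-total, and $L$ is a function with domain $S$. A fullpath is an infinite sequence $\sigma$ with $\sigma(i)\to\sigma(i+1)$ for all $i$; it starts at $\sigma(0)$. $w\to^{+}v$ means there is a finite path $w=v_0\to\cdots\to v_k=v$ with $k\ge1$. Let $\mathit{INC}$ be the set of strictly increasing infinite sequences of naturals starting at $0$. For a fullpath $\sigma$ and $\pi\in\mathit{INC}$ the $i$-th segment of $\sigma$ is $\sigma(\pi(i)),\dots,\sigma(\pi(i+1)-1)$. $\mathit{match}(B,\sigma,\delta)$ holds iff there exist $\pi,\xi\in\mathit{INC}$ such that for every $i$ and every state $x$ in the $i$-th segment of $\sigma$ w.r.t. $\pi$, $xB\delta(\xi(i))$. $B$ is a skipping simulation (SKS) iff for all $s,w$ with $sBw$: $L(s)=L(w)$, and for every fullpath $\sigma$ starting at $s$ there is a fullpath $\delta$ starting at $w$ with $\mathit{match}(B,\sigma,\delta)$. The computation tree $\mathit{ctree}(\mathcal{M},s)$ has as nodes finite sequences over $S$; it is the smallest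 tree such that $\langle s\rangle$ is the root, and if $\langle s,\dots,x\rangle$ is a node and $x\to y$ then $\langle s,\dots,x,y\rangle$ is a node whose parent is $\langle s,\dots,x\rangle$. For the SKS $B$: if not $sBw$, $\mathit{ranktCt}(\mathcal{M},s,w)$ is the empty tree; otherwise it is the largest subtree of $\mathit{ctree}(\mathcal{M},s)$ (containing the root) such that every non-root node $\langle s,\dots,x\rangle$ satisfies $xBw$ and, for all $v$ with $w\to^{+}v$, not $xBv$. (Every branch of this tree is finite.) For a tree $t$ all of whose branches are finite, ordinals are assigned to nodes by $\mathit{size}(t,x)=\bigcup_{c\text{ a child of }x}\mathit{size}(t,c)+1$ (von Neumann ordinals), and $\mathit{size}(\mathit{ranktCt}(\mathcal{M},s,w))=\mathit{size}(\mathit{ranktCt}(\mathcal{M},s,w),\langle s\rangle)$. $\prec$ is the strict order on ordinals. *)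

(* Defs.v *)
From Stdlib Require Import List Relations ClassicalEpsilon.
Import ListNotations.
Set Implicit Arguments.

Section LTS.
Variables (St Lab : Type) (R : St -> St -> Prop) (L : St -> Lab).

Definition left_total : Prop := forall x, exists y, R x y.

Definition fullpath (sigma : nat -> St) : Prop := forall i, R (sigma i) (sigma (S i)).

Definition INC (pi : nat -> nat) : Prop := pi 0 = 0 /\ forall i, pi i < pi (S i).

Definition matchB (B : St -> St -> Prop) (sigma delta : nat -> St) : Prop :=
  exists pi xi, INC pi /\ INC xi /\
    forall i k, pi i <= k < pi (S i) -> B (sigma k) (delta (xi i)).

Definition SKS (B : St -> St -> Prop) : Prop :=
  forall s w, B s w ->
    L s = L w /\
    forall sigma, fullpath sigma -> sigma 0 = s ->
      exists delta, fullpath delta /\ delta 0 = w /\ matchB B sigma delta.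

(* A tree is a predicate on nodes (finite sequences over S). *)
Fixpoint is_path (x : St) (q : list St) : Prop :=
  match q with
  | [] => True
  | y :: q' => R x y /\ is_path y q'
  end.

Definition ctree (s : St) (p : list St) : Prop :=
  exists q, p = s :: q /\ is_path s q.

(* ranktCt(M,s,w): empty unless s B w; otherwise the largest subtree of
   ctree(M,s) containing the root all of whose non-root nodes <s,..,x> satisfy
   x B w and (forall v, w ->+ v -> ~ x B v).  Since a node belongs to the largest
   such subtree iff it and all its non-root ancestors satisfy the condition,
   this is: every element after the root satisfies the condition. *)
Definition rank_cond (B : St -> St -> Prop) (w x : St) : Prop :=
  B x w /\ forall v, clos_trans St R w v -> ~ B x v.

Definition ranktCt (B : St -> St -> Prop) (s w : St) (p : list St) : Prop :=
  B s w /\ exists q, p = s :: q /\ is_path s q /\ Forall (rank_cond B w) q.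
End LTS.

(* OSup I f denotes the ordinal  U_{i in I} (f i + 1). *)
Inductive ord : Type :=
| OSup : forall (Ix : Type), (Ix -> ord) -> ord.

Fixpoint ole (a b : ord) {struct a} : Prop :=
  match a, b with
  | @OSup I0 f, @OSup J0 g => forall i, exists j, ole (f i) (g j)
  end.

Definition olt (a b : ord) : Prop :=
  match b with
  | @OSup J0 g => exists j, ole a (g j)
  end.

Section Size.
Variable S : Type.

Definition tchild (t : list S -> Prop) (c x : list S) : Prop :=
  t c /\ exists y, c = x ++ [y].

Fixpoint size_acc (t : list S -> Prop) (x : list S) (H : Acc (tchild t) x) {struct H} : ord :=
  match H with
  | Acc_intro _ h =>
      OSup (fun c : {c : list S | tchild t c x} =>
              size_acc (h (proj1_sig c) (proj2_sig c)))
  end.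

(* Total version: meaningful when every branch below x is finite (Acc);
   an arbitrary default (0) otherwise. *)
Definition size_node (t : list S -> Prop) (x : list S) : ord :=
  match excluded_middle_informative (Acc (tchild t) x) with
  | left H => size_acc H
  | right _ => OSup (fun e : False => match e with end)
  end.

Definition size_tree (t : list S -> Prop) (root : S) : ord := size_node t [root].
End Size.

(* Main.v *)
Require Import Defs.
From Stdlib Require Import List Relations Classical ClassicalEpsilon.
Import ListNotations.

Section Aux.
Variable St : Type.
Variable t : list St -> Prop.

Lemma notacc_child (x : list St) : ~ Acc (tchild t) x ->
  exists c, tchild t c x /\ ~ Acc (tchild t) c.
Proof.
  intros H. apply NNPP. intros H'. apply H. constructor. intros c Hc.
  apply NNPP. intros Hn. apply H'. exists c. auto.
Qed.

Lemma inf_chain (x0 : list St) : ~ Acc (tchild t) x0 ->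
  exists n : nat -> list St, n 0 = x0 /\ forall k, tchild t (n (S k)) (n k).
Proof.
  intros H0.
  assert (step : forall p : {x | ~ Acc (tchild t) x},
             {c | tchild t c (proj1_sig p) /\ ~ Acc (tchild t) c}).
  { intros [x Hx]. apply constructive_indefinite_description.
    apply notacc_child. exact Hx. }
  pose (nx := fix nx (k : nat) : {x | ~ Acc (tchild t) x} :=
          match k with
          | 0 => exist _ x0 H0
          | Datatypes.S m => let c := step (nx m) in
                   exist _ (proj1_sig c) (proj2 (proj2_sig c))
          end).
  exists (fun k => proj1_sig (nx k)). split; [reflexivity|].
  intros k. simpl (proj1_sig (nx (Datatypes.S k))). exact (proj1 (proj2_sig (step (nx k)))).
Qed.
End Aux.

Lemma size_mono (S : Type) (t1 t2 : list S -> Prop) (f : list S -> list S)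
  (Hf : forall c x, tchild t1 c x -> tchild t2 (f c) (f x)) :
  forall x (H1 : Acc (tchild t1) x) (H2 : Acc (tchild t2) (f x)),
    ole (size_acc H1) (size_acc H2).
Proof.
  fix IH 2. intros x H1 H2. destruct H1 as [h1]. destruct H2 as [h2].
  simpl. intros [c Hc]. exists (exist _ (f c) (Hf _ _ Hc)). simpl. apply IH.
Qed.

Lemma acc_map (S : Type) (t1 t2 : list S -> Prop) (f : list S -> list S)
  (Hf : forall c x, tchild t1 c x -> tchild t2 (f c) (f x)) :
  forall y, Acc (tchild t2) y -> forall x, y = f x -> Acc (tchild t1) x.
Proof.
  intros y H. induction H as [y _ IH]. intros x ->. constructor.
  intros c Hc. eapply IH; [apply Hf; exact Hc | reflexivity].
Qed.

Lemma last_indep (S : Type) (b : S) l d1 d2 : last (b :: l) d1 = last (b :: l) d2.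
Proof.
  revert b. induction l as [|a l IH]; intros b; simpl; auto.
  destruct l; auto. apply (IH a).
Qed.

Lemma path_app (S : Type) (R : S -> S -> Prop) : forall q a y,
  is_path R a (q ++ [y]) -> R (last (a :: q) a) y.
Proof.
  induction q as [|b q IH]; intros a y H; simpl in *.
  - tauto.
  - destruct H as [_ H]. specialize (IH b y H).
    change (R (last (a :: b :: q) a) y).
    replace (last (a :: b :: q) a) with (last (b :: q) b); auto.
    simpl. destruct q; auto. apply last_indep.
Qed.

Lemma ct_path (S : Type) (R : S -> S -> Prop) (d : nat -> S) :
  fullpath R d -> forall n, clos_trans S R (d 0) (d (Datatypes.S n)).
Proof.
  intros Hd n. induction n.
  - apply t_step, Hd.
  - eapply t_trans; [exact IHn | apply t_step, Hd].
Qed.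

Theorem lemma3 (S Lab : Type) (R : S -> S -> Prop) (L : S -> Lab)
  (Htot : left_total R) (B : S -> S -> Prop) (HB : SKS R L B)
  (s u w : S) (Hsw : B s w) (Hsu : R s u)
  (Hnode : ranktCt R B s w [s; u]) :
  olt (size_tree (ranktCt R B u w) u) (size_tree (ranktCt R B s w) s).
Proof.
  set (T := ranktCt R B s w).
  set (U := ranktCt R B u w).
  assert (Hru : rank_cond R B w u).
  { destruct Hnode as [_ [q [Hq [_ Hf]]]]. injection Hq as <-.
    inversion Hf; auto. }
  assert (Hf : forall c x, tchild U c x -> tchild T (s :: c) (s :: x)).
  { intros c x [[Huw [q [-> [Hp Hq]]]] [y Hy]]. split.
    - split; auto. exists (u :: q). split; auto. split.
      + simpl; auto.
      + constructor; auto.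
    - exists y. rewrite Hy. reflexivity. }
  assert (HaccT : Acc (tchild T) [s]).
  { apply NNPP. intros Hn. destruct (@inf_chain _ _ _ Hn) as [n [Hn0 Hnk]].
    assert (Hne : forall k, n k <> []).
    { intros [|k]; [rewrite Hn0; discriminate|].
      destruct (Hnk k) as [_ [y ->]]. destruct (n k); discriminate. }
    set (sigma := fun k => last (n k) s).
    assert (Hstep : forall k, R (sigma k) (sigma (Datatypes.S k)) /\
                               rank_cond R B w (sigma (Datatypes.S k))).
    { intros k. unfold sigma. destruct (Hnk k) as [[_ [q [Hq [Hp Hfa]]]] [y Hy]].
      rewrite Hy. rewrite last_last. rewrite Hy in Hq.
      specialize (Hne k). destruct (n k) as [|x0 x'] eqn:E; [congruence|].
      simpl in Hq. injection Hq as <- <-.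
      split.
      - apply path_app in Hp. exact Hp.
      - apply Forall_app in Hfa. destruct Hfa as [_ Hfa]. inversion Hfa; auto. }
    destruct (HB s w Hsw) as [_ HB2].
    assert (Hfp : fullpath R sigma) by (intro k; apply Hstep).
    assert (H0 : sigma 0 = s) by (unfold sigma; rewrite Hn0; reflexivity).
    destruct (HB2 sigma Hfp H0) as [delta [Hd [Hd0 [pi [xi [[Hp0 Hp] [[Hx0 Hx] Hm]]]]]]].
    specialize (Hm 1 (pi 1)). assert (Hm' := Hm (conj (le_n _) (Hp 1))).
    specialize (Hp 0). rewrite Hp0 in Hp. specialize (Hx 0). rewrite Hx0 in Hx.
    destruct (pi 1) as [|p1] eqn:Ep; [inversion Hp|].
    destruct (xi 1) as [|x1] eqn:Ex; [inversion Hx|].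
    destruct (Hstep p1) as [_ [_ Hrc]]. apply (Hrc (delta (Datatypes.S x1))).
    - rewrite <- Hd0. apply ct_path; auto.
    - exact Hm'. }
  assert (HaccU : Acc (tchild U) [u]).
  { destruct HaccT as [h]. assert (Hc : tchild T [s; u] [s]).
    { split; [exact Hnode | exists u; reflexivity]. }
    eapply (@acc_map _ _ _ _ Hf); [exact (h _ Hc) | reflexivity]. }
  unfold size_tree, size_node.
  destruct (excluded_middle_informative (Acc (tchild U) [u])) as [HU|HU]; [|contradiction].
  destruct (excluded_middle_informative (Acc (tchild T) [s])) as [HT|HT]; [|contradiction].
  destruct HT as [h]. simpl.
  assert (Hc : tchild T [s; u] [s]).
  { split; [exact Hnode | exists u; reflexivity]. }
  exists (exist _ [s; u] Hc). simpl.
  apply (@size_mono _ _ _ _ Hf).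
Qed.
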